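(* Let $\mathbf p$ be a Nash-routing of a sum-bucket game on a simple graph with $n\ge2$ nodes whose strategy paths are all simple, and let $\mathbf p^*$ be an optimal routing with $\overline C^*=\overline C(\mathbf p^* )$ and $\overline D^*=\overline D(\mathbf p^* )$. Then $\overline C(\mathbf p)\le18\,\overline C^*\,\overline D^*\lg^2 n$.
   Context: A routing game $(\mathbf N,G,\mathcal P)$: players $\{1,\dots,N\}$ ($N\ge1$), a simple graph $G$ with $n$ nodes, and for each player $i$ a nonempty finite set $\mathcal P_i$ of simple paths (each with at least one edge) from $u_i$ to $v_i$; $\mathcal P=\bigcup_i\mathcal P_i$, $L=\max_{p\in\mathcal P}|p|$ (number of edges). A routing is $\mathbf p=[p_1,\dots,p_N]$, $p_i\in\mathcal P_i$. Sum-bucket game: for $k=0,\dots,\lceil\lg L\rceil$ bucket $B_k$ = paths in $\mathcal P$ with length in $[2^k,2^{k+1})$, $B(q)$ = bucket index of $q$; normalized length $\overline D_q=2^{B(q)+1}-1$; $\overline C_{e,q}(\mathbf p)$ = number of players $j$ with $e\in p_j$ and $B(p_j)=B(q)$; $\overline C_q(\mathbf p)=\max_{e\in q}\overline C_{e,q}(\mathbf p)$; $\overline C_i=\overline C_{p_i}$, $\overline D_i=\overline D_{p_i}$; player cost $pc_i=\overline C_i+\overline D_i$; $\overline C(\mathbf p)=\max_i\overline C_i$, $\overline D(\mathbf p)=\max_i\overline D_i$; social cost $SC=\overline C+\overline D$. A Nash-routing: no player can strictly lower its cost by unilaterally changing its path within $\mathcal P_i$; an optimal routing minimizes $SC$.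 $\lg=\log_2$. *)

(* Defs.v *)
From mathcomp Require Import all_boot.
From Stdlib Require Import Reals.

Set Implicit Arguments.
Unset Strict Implicit.
Unset Printing Implicit Defensive.

Definition simple_graph (n : nat) (G : rel 'I_n) : Prop :=
  symmetric G /\ irreflexive G.

Definition simple_path (n : nat) (G : rel 'I_n) (u v : 'I_n) (q : seq 'I_n) : bool :=
  match q with
  | x :: s => [&& x == u, s != [::], path G x s, last x s == v & uniq q]
  | [::] => false
  end.

Definition plen (n : nat) (q : seq 'I_n) : nat := (size q).-1.

Definition pedges (n : nat) (q : seq 'I_n) : seq {set 'I_n} :=
  [seq [set x.1; x.2] | x <- zip q (behead q)].

Definition bucket (n : nat) (q : seq 'I_n) : nat := trunc_log 2 (plen q).

Definition Dbar (n : nat) (q : seq 'I_n) : nat := expn 2 (bucket q).+1 - 1.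

Definition routing (n N : nat) := 'I_N -> seq 'I_n.

Definition is_routing (n N : nat) (P : 'I_N -> seq (seq 'I_n)) (r : routing n N) : Prop :=
  forall i, r i \in P i.

Definition Cbar_e (n N : nat) (r : routing n N) (e : {set 'I_n}) (q : seq 'I_n) : nat :=
  #|[set j : 'I_N | (e \in pedges (r j)) && (bucket (r j) == bucket q)]|.

Definition Cbar_q (n N : nat) (r : routing n N) (q : seq 'I_n) : nat :=
  \max_(e <- pedges q) Cbar_e r e q.

Definition Cbar_i (n N : nat) (r : routing n N) (i : 'I_N) : nat := Cbar_q r (r i).
Definition Dbar_i (n N : nat) (r : routing n N) (i : 'I_N) : nat := Dbar (r i).
Definition pcost (n N : nat) (r : routing n N) (i : 'I_N) : nat := Cbar_i r i + Dbar_i r i.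

Definition Cbar (n N : nat) (r : routing n N) : nat := \max_(i < N) Cbar_i r i.
Definition DbarR (n N : nat) (r : routing n N) : nat := \max_(i < N) Dbar_i r i.
Definition SC (n N : nat) (r : routing n N) : nat := Cbar r + DbarR r.

Definition deviate (n N : nat) (r : routing n N) (i : 'I_N) (q : seq 'I_n) : routing n N :=
  fun j => if j == i then q else r j.

Definition nash (n N : nat) (P : 'I_N -> seq (seq 'I_n)) (r : routing n N) : Prop :=
  is_routing P r /\
  forall (i : 'I_N) (q : seq 'I_n), q \in P i -> pcost r i <= pcost (deviate r i q) i.

Definition optimal (n N : nat) (P : 'I_N -> seq (seq 'I_n)) (r : routing n N) : Prop :=
  is_routing P r /\ forall r' : routing n N, is_routing P r' -> SC r <= SC r'.

Definition routing_game (n N : nat) (G : rel 'I_n) (u v : 'I_N -> 'I_n)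
  (P : 'I_N -> seq (seq 'I_n)) : Prop :=
  simple_graph G /\
  forall i : 'I_N, P i != [::] /\ forall q, q \in P i -> simple_path G (u i) (v i) q.

Definition lg (x : nat) : R := (ln (INR x) / ln 2)%R.

(* Main.v *)
Require Import Defs.
From mathcomp Require Import all_boot.
From Stdlib Require Import Reals.
From Stdlib Require Import Lra Lia Psatz.
Set Implicit Arguments.
Unset Strict Implicit.
Unset Printing Implicit Defensive.

Ltac tolia := intros; repeat match goal with
  | H : is_true (_ <= _) |- _ => move/leP: H => H
  | H : is_true (_ < _) |- _ => move/ltP: H => H
  | |- is_true (_ <= _) => apply/leP
  | |- is_true (_ < _) => apply/ltP
  end; unfold addn, subn, muln in *; change predn with Nat.pred in *.

Lemma bigmax_seq_arg (T : eqType) (r : seq T) (F : T -> nat) :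
  r != [::] -> exists2 x, x \in r & \max_(y <- r) F y = F x.
Proof.
elim: r => [//|a r IH] _.
rewrite big_cons.
case: (r =P [::]) => [->|/eqP hr].
  by exists a; rewrite ?inE ?big_nil ?maxn0.
have [x xr ->] := IH hr.
case: (leqP (F a) (F x)) => h.
  by exists x; rewrite ?inE ?xr ?orbT.
by exists a; rewrite ?inE ?eqxx.
Qed.

Lemma pair_inj (n : nat) (a b c d : 'I_n) : a <= b -> c <= d ->
  [set a; b] = [set c; d] -> a = c /\ b = d.
Proof.
move=> hab hcd E.
have ha : a \in [set c; d] by rewrite -E !inE eqxx.
have hb : b \in [set c; d] by rewrite -E !inE eqxx orbT.
have hc : c \in [set a; b] by rewrite E !inE eqxx.
have hd : d \in [set a; b] by rewrite E !inE eqxx orbT.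
move: ha hb hc hd; rewrite !inE.
move=> /orP[/eqP ac|/eqP ad] /orP[/eqP bc|/eqP bd] /orP[/eqP ca|/eqP cb] /orP[/eqP da|/eqP db];
  subst => //; split; apply/val_inj/eqP; rewrite eqn_leq ?hab ?hcd //=;
  by move: hab hcd; tolia; lia.
Qed.

Lemma size_pedges (n : nat) (q : seq 'I_n) : size (pedges q) = plen q.
Proof.
rewrite /pedges size_map size_zip size_behead /plen.
by apply/minn_idPr/leq_pred.
Qed.

Lemma plen_le_Dbar (n : nat) (q : seq 'I_n) : plen q <= Dbar q.
Proof.
rewrite /Dbar /bucket.
have := trunc_log_ltn (plen q) (isT : 1 < 2).
move: (expn 2 (trunc_log 2 (plen q)).+1) => X; tolia; lia.
Qed.

Lemma Dbar_gt0 (n : nat) (q : seq 'I_n) : 0 < Dbar q.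
Proof.
rewrite /Dbar expnS.
have : 0 < expn 2 (bucket q) by rewrite expn_gt0.
move: (expn 2 (bucket q)) => X; tolia; lia.
Qed.

Lemma bucket_lt (n : nat) (q : seq 'I_n) : 0 < n -> uniq q -> bucket q < n.
Proof.
move=> hn uq.
have hs : size q <= n.
  by move/card_uniqP: uq => <-; rewrite -[X in _ <= X]card_ord max_card.
rewrite /bucket.
case: (posnP (plen q)) => [->|hp]; first by rewrite trunc_log0.
have h1 := trunc_logP (isT : 1 < 2) hp.
have h2 := ltn_expl (trunc_log 2 (plen q)) (isT : 1 < 2).
move: h1 h2 hs; move: (trunc_log 2 (plen q)) => t; move: (expn 2 t) => X; rewrite /plen.
tolia; lia.
Qed.

Lemma pedges_form (n : nat) (q : seq 'I_n) e : e \in pedges q ->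
  exists a b : 'I_n, a <= b /\ e = [set a; b].
Proof.
case/mapP => [[x y] _ ->] /=.
case: (leqP x y) => h; first by exists x, y.
by exists y, x; split; [apply: ltnW | apply: setUC].
Qed.

Lemma pedges_nil (n : nat) (x : 'I_n) s : s != [::] -> pedges (x :: s) != [::].
Proof. by case: s. Qed.

Definition cnt (n N : nat) (r : routing n N) (b : nat) (e : {set 'I_n}) : nat :=
  #|[set j : 'I_N | (e \in pedges (r j)) && (bucket (r j) == b)]|.

Lemma card_set_sum (T : finType) (f : pred T) : #|[set j | f j]| = \sum_j (f j : nat).
Proof.
rewrite -sum1_card big_mkcond /=; apply: eq_bigr => j _; rewrite inE; by case: (f j).
Qed.

Lemma cnt_le_Cbar_i (n N : nat) (r : routing n N) j e :
  e \in pedges (r j) -> cnt r (bucket (r j)) e <= Cbar_i r j.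
Proof. move=> he; exact: (@leq_bigmax_seq _ _ xpredT (fun e => Cbar_e r e (r j)) e). Qed.

Lemma Cbar_i_le (n N : nat) (r : routing n N) j : Cbar_i r j <= Cbar r.
Proof. exact: (@leq_bigmax _ (fun j => Cbar_i r j)). Qed.

Lemma cnt_le_Cbar (n N : nat) (r : routing n N) b e : cnt r b e <= Cbar r.
Proof.
case: (posnP (cnt r b e)) => [->//|]; rewrite /cnt card_gt0 => /set0Pn [j].
rewrite inE => /andP [he /eqP hb].
apply: leq_trans (Cbar_i_le r j).
by rewrite -hb; apply: cnt_le_Cbar_i.
Qed.

Lemma dev_cnt (n N : nat) (r : routing n N) i q b e :
  cnt (deviate r i q) b e <= (cnt r b e).+1.
Proof.
rewrite /cnt.
apply: leq_trans (_ : #|i |: [set j : 'I_N | (e \in pedges (r j)) && (bucket (r j) == b)]| <= _).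
  apply: subset_leq_card; apply/subsetP => j; rewrite !inE /deviate.
  by case: (j == i).
by rewrite cardsU1; case: (_ \notin _).
Qed.

Lemma nash_bound (n N : nat) (P : 'I_N -> seq (seq 'I_n)) (p pstar : routing n N) :
  nash P p -> is_routing P pstar -> forall i,
  Cbar_i p i + Dbar_i p i <=
    (\max_(e <- pedges (pstar i)) cnt p (bucket (pstar i)) e).+1 + Dbar (pstar i).
Proof.
move=> [_ hN] hs i.
apply: leq_trans (hN i (pstar i) (hs i)) _.
rewrite /pcost /Cbar_i /Dbar_i /deviate eqxx leq_add2r.
apply/bigmax_leqP_seq => e he _.
apply: leq_trans (dev_cnt p i (pstar i) (bucket (pstar i)) e) _.
rewrite ltnS.
exact: (@leq_bigmax_seq _ _ xpredT (fun e => cnt p (bucket (pstar i)) e) e).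
Qed.

Definition slot (n : nat) := (('I_n * 'I_n) * 'I_n)%type.
Definition sedge (n : nat) (s : slot n) : {set 'I_n} := [set s.1.1; s.1.2].

Definition Hs (n N : nat) (r : routing n N) (y : nat) : {set slot n} :=
  [set s : slot n | (s.1.1 <= s.1.2) && (y <= cnt r s.2 (sedge s))].
Definition As (n N : nat) (r : routing n N) (y : nat) : {set 'I_N} :=
  [set j : 'I_N | y <= Cbar_i r j].

Lemma mk_slot (n : nat) (q : seq 'I_n) e : 0 < n -> uniq q -> e \in pedges q ->
  exists s : slot n, [/\ s.1.1 <= s.1.2, sedge s = e & (s.2 : nat) = bucket q].
Proof.
move=> hn uq he.
have [a [b [hab ->]]] := pedges_form he.
by exists ((a, b), Ordinal (bucket_lt hn uq)).
Qed.

Lemma Hs_card (n N : nat) (r : routing n N) y : #|Hs r y| <= n * n * n.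
Proof.
apply: leq_trans (max_card _) _.
by rewrite !card_prod !card_ord.
Qed.

Lemma KI1 n N (r : routing n N) y l :
  (forall j, j \in As r y -> plen (r j) <= l) -> y * #|Hs r y| <= #|As r y| * l.
Proof.
move=> hl.
rewrite mulnC -!sum_nat_const.
apply: (@leq_trans (\sum_(s in Hs r y) cnt r s.2 (sedge s))).
  by apply: leq_sum => s; rewrite inE => /andP[_ h].
under eq_bigr => s _ do rewrite /cnt card_set_sum.
rewrite exchange_big /=.
rewrite [X in _ <= X]big_mkcond /=.
apply: leq_sum => j _.
case: ifP => hj.
  apply: (@leq_trans #|[set s : slot n | (s.1.1 <= s.1.2) &&
        ((sedge s \in pedges (r j)) && (bucket (r j) == s.2))]|).
    rewrite card_set_sum big_mkcond /=; apply: leq_sum => s _.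
    by case: ifP => [|//]; rewrite inE => /andP[-> _].
  rewrite -(@card_in_imset _ _ (@sedge n)); last first.
    move=> [[a1 b1] c1] [[a2 b2] c2]; rewrite !inE /=.
    move=> /andP[h1 /andP[_ /eqP e1]] /andP[h2 /andP[_ /eqP e2]] E.
    have [-> ->] := pair_inj h1 h2 E.
    by congr (_, _); apply: val_inj; rewrite /= -e1 -e2.
  apply: leq_trans (_ : #|pedges (r j)| <= _).
    apply: subset_leq_card; apply/subsetP => e /imsetP [s].
    by rewrite inE => /andP[_ /andP[he _]] ->.
  by apply: leq_trans (card_size _) _; rewrite size_pedges; apply: hl.
rewrite leqn0; apply/eqP; apply: big1 => s.
rewrite inE => /andP[_ hy].
case E: (_ && _) => //.
move/andP: E => [he /eqP hb].
move: hj; rewrite inE; move/negbT/negP; case.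
apply: leq_trans hy _; rewrite -hb.
exact: cnt_le_Cbar_i.
Qed.

Lemma KI2 n N (P : 'I_N -> seq (seq 'I_n)) (p pstar : routing n N) (hn : 0 < n)
  (hp : nash P p) (hs : is_routing P pstar) (hu : forall i, uniq (pstar i))
  (hne : forall i, pedges (pstar i) != [::]) y :
  #|As p y| <= #|Hs p (y - DbarR pstar)| * Cbar pstar.
Proof.
rewrite -sum1_card -sum_nat_const.
pose Z s i := (sedge s \in pedges (pstar i)) && ((s.2 : nat) == bucket (pstar i)).
apply: (@leq_trans (\sum_(i in As p y) \sum_(s in Hs p (y - DbarR pstar)) (Z s i : nat))).
  apply: leq_sum => i hi.
  have hb := nash_bound hp hs i.
  have [e he hm] := bigmax_seq_arg (fun e => cnt p (bucket (pstar i)) e) (hne i).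
  have [s [s12 se s2]] := mk_slot hn (hu i) he.
  have D1 := Dbar_gt0 (p i).
  have D2 : Dbar (pstar i) <= DbarR pstar := @leq_bigmax _ (fun i => Dbar_i pstar i) i.
  have hsH : s \in Hs p (y - DbarR pstar).
    rewrite inE s12 se s2 /= -hm.
    move: hi; rewrite inE => hi.
    move: hb hi D1 D2; rewrite /Dbar_i.
    move: (\max_(e0 <- _) _) (Cbar_i p i) (Dbar (p i)) (Dbar (pstar i)) (DbarR pstar).
    by move=> a b c d f; tolia; lia.
  rewrite (bigD1 s) //= /Z se he s2 eqxx /=.
  exact: leq_addr.
rewrite exchange_big /=; apply: leq_sum => s hsH.
apply: (@leq_trans (\sum_i (Z s i : nat))).
  rewrite [X in X <= _]big_mkcond /=; apply: leq_sum => i _.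
  by case: ifP.
rewrite -card_set_sum.
case: (posnP #|[set i | Z s i]|) => [->//|]; rewrite card_gt0 => /set0Pn [i0].
rewrite inE => /andP [he /eqP hb].
apply: leq_trans (_ : cnt pstar (bucket (pstar i0)) (sedge s) <= _).
  apply: subset_leq_card; apply/subsetP => i; rewrite !inE => /andP [he' /eqP hb'].
  by rewrite he' /= -hb -hb'.
exact: leq_trans (cnt_le_Cbar_i he) (Cbar_i_le _ _).
Qed.

Lemma iter_double (h : nat -> nat) C c D K :
  0 < c ->
  (forall y, y <= C -> y * h y <= h (y - D) * c * (C + 1 + D - y)) ->
  1 <= h C ->
  (forall k, k < K -> 2 * c * (1 + D + k * D) <= C - k * D) ->
  forall k, k <= K -> expn 2 k <= h (C - k * D).
Proof.
move=> c0 KI base cond; elim => [|k IH] hk.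
  by rewrite mul0n subn0.
have hk' : k < K := hk.
have hc := cond k hk'.
have hkD : k * D < C.
  move: hc c0; move: (k * D) => x; tolia; nia.
have hyC : C - k * D <= C := leq_subr _ _.
have hl : C + 1 + D - (C - k * D) = 1 + D + k * D.
  move: hkD; move: (k * D) => x; tolia; lia.
have := KI _ hyC; rewrite hl.
have -> : C - k.+1 * D = C - k * D - D by rewrite mulSnr subnDA.
have lpos : 0 < 1 + D + k * D by rewrite -addnA add1n.
move: (IH (ltnW hk)) hc c0 lpos.
move: (C - k * D) (1 + D + k * D) => y l.
move: (h y) (h (y - D)) => a b.
move=> IHa hc c0 lpos hy.
have l0 : 0 < c * l by rewrite muln_gt0 c0.
rewrite expnS.
apply: leq_trans (leq_mul (leqnn 2) IHa) _.
rewrite -(leq_pmul2l l0).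
have := leq_mul hc (leqnn a); move: hy; tolia; nia.
Qed.

Lemma INR_expn (a b : nat) : INR (expn a b) = (INR a ^ b)%R.
Proof.
elim: b => [|b IH]; first by rewrite expn0.
by rewrite expnS -multE mult_INR IH /=.
Qed.

Lemma ln_le' (x y : R) : (0 < x)%R -> (x <= y)%R -> (ln x <= ln y)%R.
Proof.
move=> hx hxy; case: (Rle_lt_or_eq_dec _ _ hxy) => h.
  by apply: Rlt_le; apply: ln_increasing.
by rewrite h; apply: Rle_refl.
Qed.

Lemma real_part (n t : nat) : 2 <= n -> expn 2 t <= expn n 3 ->
  (INR (3 * t.+1 + 4) <= 18 * lg n ^ 2)%R.
Proof.
move=> hn ht.
have ln2 : (0 < ln 2)%R by have := ln_lt_2; lra.
have hn' : (2 <= INR n)%R.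
  by have := le_INR 2 n (elimT leP hn); rewrite /= => h; lra.
have h1 : (INR 2 ^ t <= INR n ^ 3)%R.
  by rewrite -!INR_expn; apply: le_INR; apply/leP.
have h2 : (INR t * ln 2 <= 3 * ln (INR n))%R.
  have := ln_le' (pow_lt _ t (ltac:(simpl; lra) : (0 < INR 2)%R)) h1.
  rewrite !ln_pow /=; try lra.
  by replace (1 + 1)%R with 2%R by lra; lra.
have h3 : (ln 2 <= ln (INR n))%R by apply: ln_le'; lra.
set x := lg n.
have hx : (x * ln 2 = ln (INR n))%R by rewrite /x /lg; field; lra.
have x1 : (1 <= x)%R.
  apply: (Rmult_le_reg_r (ln 2)) => //; lra.
have tx : (INR t <= 3 * x)%R.
  apply: (Rmult_le_reg_r (ln 2)) => //; lra.
have -> : INR (3 * t.+1 + 4) = (3 * INR t + 7)%R.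
  rewrite -multE -plusE plus_INR mult_INR (S_INR t) /=; lra.
clearbody x; nra.
Qed.

Lemma sp_props n (G : rel 'I_n) u v q : simple_path G u v q -> uniq q /\ pedges q != [::].
Proof.
case: q => [//|x s] /=; case/and5P => _ hs _ _ uq; split=> //; exact: pedges_nil.
Qed.

Unset Implicit Arguments.

Theorem mainTheorem14 (n N : nat) (hn : 2 <= n) (hN : 1 <= N)
  (G : rel 'I_n) (u v : 'I_N -> 'I_n) (P : 'I_N -> seq (seq 'I_n))
  (hgame : routing_game G u v P)
  (p pstar : routing n N) (hp : nash P p) (hopt : optimal P pstar) :
  (INR (Cbar p) <= 18 * INR (Cbar pstar) * INR (DbarR pstar) * (lg n) ^ 2)%R.
Proof.
have n0 : 0 < n by apply: ltnW.
have [_ hgm] := hgame.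
have hsp : forall (r : routing n N), is_routing P r -> forall i, uniq (r i) /\ pedges (r i) != [::].
  move=> r hr i; have [_ h] := hgm i; exact: sp_props (h _ (hr i)).
have hps := hopt.1.
have hpr := hp.1.
set C := Cbar p. set c := Cbar pstar. set D := DbarR pstar.
pose i0 : 'I_N := Ordinal hN.
have c1 : 0 < c.
  have [_ ne] := hsp _ hps i0.
  case E: (pedges (pstar i0)) ne => [//|e r] _.
  have he : e \in pedges (pstar i0) by rewrite E inE eqxx.
  apply: leq_trans (leq_trans (cnt_le_Cbar_i he) (Cbar_i_le _ _)).
  by rewrite /cnt card_gt0; apply/set0Pn; exists i0; rewrite inE he eqxx.
have D1 : 0 < D := leq_trans (Dbar_gt0 (pstar i0)) (@leq_bigmax _ (fun i => Dbar_i pstar i) i0).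
have KI : forall y, y <= C -> y * #|Hs p y| <= #|Hs p (y - D)| * c * (C + 1 + D - y).
  move=> y hy.
  apply: leq_trans (KI1 (l := C + 1 + D - y) _) _.
    move=> j; rewrite inE => hj.
    have hb := nash_bound hp hps j.
    have hm : \max_(e <- pedges (pstar j)) cnt p (bucket (pstar j)) e <= C.
      by apply/bigmax_leqP_seq => e _ _; apply: cnt_le_Cbar.
    have D2 : Dbar (pstar j) <= D := @leq_bigmax _ (fun i => Dbar_i pstar i) j.
    have := plen_le_Dbar (p j).
    move: hb hm D2 hj; rewrite /Dbar_i.
    move: (\max_(e <- _) _) (Cbar_i p j) (Dbar (p j)) (Dbar (pstar j)) (plen (p j)).
    by move=> a1 a2 a3 a4 a5; tolia; lia.
  rewrite leq_mul2r; apply/orP; right.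
  exact: KI2 n0 hp hps (fun i => (hsp _ hps i).1) (fun i => (hsp _ hps i).2) y.
case: (posnP C) => [C0 | Cpos].
  rewrite C0; clearbody c D.
  apply: Rmult_le_pos; [apply: Rmult_le_pos; [apply: Rmult_le_pos; [lra | apply: pos_INR] | apply: pos_INR] | apply: pow2_ge_0].
have base : 1 <= #|Hs p C|.
  have [j0 hj0] := eq_bigmax (fun j => Cbar_i p j) (ltac:(by rewrite card_ord) : 0 < #|'I_N|).
  have [uq ne] := hsp _ hpr j0.
  have [e he hm] := bigmax_seq_arg (fun e => cnt p (bucket (p j0)) e) ne.
  have [s [s12 se s2]] := mk_slot n0 uq he.
  have hm' : Cbar_i p j0 = cnt p (bucket (p j0)) e := hm.
  rewrite card_gt0; apply/set0Pn; exists s; rewrite inE s12 se s2 /=.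
  by rewrite -hm' -hj0.
set t := trunc_log 2 (expn n 3).
have htK : expn n 3 < expn 2 t.+1 := trunc_log_ltn _ (isT : 1 < 2).
have ht : expn 2 t <= expn n 3 by apply: trunc_logP => //; rewrite expn_gt0 n0.
have hnat : C <= c * D * (3 * t.+1 + 4).
  case: (boolP [forall k : 'I_t.+1, 2 * c * (1 + D + k * D) <= C - k * D]) => hall.
    exfalso.
    have h2 := iter_double c1 KI base (K := t.+1) (fun k hk => forallP hall (Ordinal hk)) (leqnn _).
    have := Hs_card p (C - t.+1 * D).
    have -> : n * n * n = expn n 3 by rewrite !expnS expn0 muln1 mulnA.
    move=> h3; have := leq_ltn_trans (leq_trans h2 h3) htK.
    by rewrite ltnn.
  move/forallPn: hall => [[k hk]] /=; rewrite -ltnNge => hlt.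
  move: hk hlt c1 D1; move: (t.+1) => K hk hlt c1 D1.
  have x1 : c <= c * D by rewrite leq_pmulr.
  have x2 : k * D <= c * D * K.
    apply: leq_trans (_ : K * D <= _); first by rewrite leq_mul2r (ltnW hk) orbT.
    by rewrite -mulnA (mulnC D K) leq_pmull.
  have x3 : c * D * k <= c * D * K by rewrite leq_mul2l (ltnW hk) orbT.
  have e1 : 2 * c * (1 + D + k * D) = 2 * c + 2 * (c * D) + 2 * (c * D * k).
    by tolia; lia.
  have e2 : c * D * (3 * K + 4) = 3 * (c * D * K) + 4 * (c * D).
    by tolia; lia.
  rewrite e2; move: hlt; rewrite e1.
  move: x1 x2 x3; move: (c * D) (c * D * k) (c * D * K) (k * D) => a1 a2 a3 a4.
  by tolia; lia.
have hr := real_part hn ht.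
apply: Rle_trans (le_INR _ _ (elimT leP hnat)) _.
rewrite -!multE !mult_INR.
have cd : (0 <= INR c * INR D)%R by apply: Rmult_le_pos; apply: pos_INR.
apply: Rle_trans (Rmult_le_compat_l _ _ _ cd hr) _; right; ring.
Qed.
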